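(* Consider a fully connected layer $w^i=\phi_i(W_iw^{i-1}+b_i)$ with $W_i\in\mathbb{R}^{n_i\times n_{i-1}}$, $b_i\in\mathbb{R}^{n_i}$ and $\phi_i(\nu)=(\varphi(\nu_1),\dots,\varphi(\nu_{n_i}))^\top$, where $\varphi:\mathbb{R}\to\mathbb{R}$ is slope-restricted on $[0,1]$. Let $Q_i\in\mathbb{S}^{n_i}$, $S_i\in\mathbb{R}^{n_i\times n_{i-1}}$, $R_i\in\mathbb{S}^{n_{i-1}}$. If there exists a positive definite diagonal $\Lambda_i\in\mathbb{R}^{n_i\times n_i}$ such that $$\begin{bmatrix}R_i & S_i^\top-W_i^\top\Lambda_i\\ S_i-\Lambda_iW_i & 2\Lambda_i+Q_i\end{bmatrix}\succeq 0,$$ then for all $w^{i-1}_a,w^{i-1}_b\in\mathbb{R}^{n_{i-1}}$, with $\Delta w^{i}=w^i_a-w^i_b$ and $\Delta w^{i-1}=w^{i-1}_a-w^{i-1}_b$, $${\Delta w^i}^\top Q_i\Delta w^i+2{\Delta w^i}^\top S_i\Delta w^{i-1}+{\Delta w^{i-1}}^\top R_i\Delta w^{i-1}\ge 0.$$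
   Context: $\mathbb{S}^n$ denotes the real symmetric $n\times n$ matrices. A function $\varphi:\mathbb{R}\to\mathbb{R}$ is slope-restricted on $[0,1]$ if $0\le\frac{\varphi(s)-\varphi(t)}{s-t}\le 1$ for all $s\ne t$. *)

(* Defs.v *)
From mathcomp Require Import all_boot all_order all_algebra.
Set Implicit Arguments. Unset Strict Implicit. Unset Printing Implicit Defensive.
Import Order.TTheory GRing.Theory Num.Theory.
Local Open Scope ring_scope.

Definition slope_restricted01 (R : realFieldType) (f : R -> R) : Prop :=
  forall s t : R, s != t -> 0 <= (f s - f t) / (s - t) <= 1.

Definition sym_mx (R : ringType) (n : nat) (A : 'M[R]_n) : Prop := A^T = A.

Definition psd (R : realFieldType) (n : nat) (A : 'M[R]_n) : Prop :=
  sym_mx A /\ forall x : 'cV[R]_n, 0 <= (x^T *m A *m x) ord0 ord0.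

Definition pos_diag (R : realFieldType) (n : nat) (L : 'M[R]_n) : Prop :=
  is_diag_mx L /\ forall i : 'I_n, 0 < L i i.

Definition layer (R : ringType) (m n : nat) (f : R -> R)
  (W : 'M[R]_(n, m)) (b : 'cV[R]_n) (w : 'cV[R]_m) : 'cV[R]_n :=
  map_mx f (W *m w + b).

(* Main.v *)
Require Import Defs.
From mathcomp Require Import all_boot all_order all_algebra.
From mathcomp Require Import ring lra.
Import Order.TTheory GRing.Theory Num.Theory.
Local Open Scope ring_scope.

Lemma slope_key (R : realFieldType) (f : R -> R) (x y : R) :
  slope_restricted01 f -> 0 <= (f x - f y) * ((x - y) - (f x - f y)).
Proof.
move=> hf; have [->|nxy] := eqVneq x y; first by rewrite subrr mul0r.
have /andP[h0 h1] := hf _ _ nxy.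
have hxy : x - y != 0 by rewrite subr_eq0.
set q := (f x - f y) / (x - y) in h0 h1.
have -> : f x - f y = q * (x - y) by rewrite /q divfK.
have -> : q * (x - y) * ((x - y) - q * (x - y)) = (q * (1 - q)) * ((x - y) * (x - y)) by ring.
apply: mulr_ge0; last exact: mulr_ge0_le0 || by rewrite -expr2 sqr_ge0.
by apply: mulr_ge0 => //; rewrite subr_ge0.
Qed.

Definition e {R : ringType} (A : 'M[R]_1) := A ord0 ord0.
Lemma eD (R : ringType) (A B : 'M[R]_1) : e (A + B) = e A + e B.
Proof. by rewrite /e mxE. Qed.
Lemma eN (R : ringType) (A B : 'M[R]_1) : e (A - B) = e A - e B.
Proof. by rewrite /e !mxE. Qed.
Lemma eNeg (R : ringType) (A : 'M[R]_1) : e (- A) = - e A.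
Proof. by rewrite /e !mxE. Qed.
Lemma eZ (R : ringType) a (A : 'M[R]_1) : e (a *: A) = a * e A.
Proof. by rewrite /e !mxE. Qed.
Lemma eT {R : comRingType} {p q : nat} (A : 'M[R]_(1, p)) (M : 'M[R]_(p, q)) (B : 'M[R]_(q,1)) :
  e (A *m M *m B) = e (B^T *m M^T *m A^T).
Proof. by rewrite /e -trmx_mul -trmx_mul [RHS]mxE mulmxA. Qed.

Lemma quad_expand (R : comRingType) m n (x : 'cV[R]_m) (y : 'cV[R]_n) Rm S W L Q :
  L^T = L ->
  e ((col_mx x y)^T *m block_mx Rm (S^T - W^T *m L) (S - L *m W) (2%:R *: L + Q) *m col_mx x y)
  = e (x^T *m Rm *m x) + 2 * e (y^T *m S *m x) - 2 * e (y^T *m L *m (W *m x))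
    + 2 * e (y^T *m L *m y) + e (y^T *m Q *m y).
Proof.
move=> Ls.
rewrite tr_col_mx mul_row_block mul_row_col.
rewrite !(mulmxDl, mulmxDr, mulmxBl, mulmxBr, mulmxA, mulmxN, mulmxBl, mulNmx).
rewrite -scalemxAr -scalemxAl !(eD, eN, eZ).
have h1 : e (x^T *m S^T *m y) = e (y^T *m S *m x) by rewrite eT !trmxK.
have h2 : e (x^T *m W^T *m L *m y) = e (y^T *m L *m W *m x).
  by rewrite eT trmx_mul !trmxK Ls !mulmxA.
rewrite !eNeg h1 h2 -!mulmxA.
ring.
Qed.

Theorem lemma6 (R : realFieldType) (nprev ni : nat) (varphi : R -> R)
  (W : 'M[R]_(ni, nprev)) (b : 'cV[R]_ni)
  (Q : 'M[R]_ni) (S : 'M[R]_(ni, nprev)) (Rm : 'M[R]_nprev) :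
  slope_restricted01 varphi ->
  sym_mx Q -> sym_mx Rm ->
  (exists L : 'M[R]_ni, pos_diag L /\
     psd (block_mx Rm (S^T - W^T *m L) (S - L *m W) (2%:R *: L + Q))) ->
  forall wa wb : 'cV[R]_nprev,
    let dwp := wa - wb in
    let dw := layer varphi W b wa - layer varphi W b wb in
    0 <= (dw^T *m Q *m dw + 2%:R *: (dw^T *m S *m dwp) + dwp^T *m Rm *m dwp) ord0 ord0.
Proof.
move=> hf hQ hR [L [[/is_diag_mxP dL pL] [_ psdB]]] wa wb.
cbv zeta.
set dwp := wa - wb.
set dw := layer varphi W b wa - layer varphi W b wb.
set v := W *m dwp.
have key : 0 <= (dw^T *m L *m (v - dw)) ord0 ord0.
  rewrite mxE; apply: sumr_ge0 => j _.
  rewrite mxE (bigD1 j) //= big1 ?addr0; last first.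
    by move=> k nk; rewrite mxE dL ?mulr0.
  rewrite [dw^T _ _]mxE mulrAC mulrC; apply: mulr_ge0; first exact: ltW.
  rewrite [(v - dw) _ _]mxE.
  have -> : v j ord0 = (W *m wa + b) j ord0 - (W *m wb + b) j ord0.
    by rewrite /v /dwp mulmxBr !mxE; ring.
  rewrite /dw /layer !mxE; exact: slope_key.
have Ls : L^T = L.
  apply/matrixP => i j; rewrite mxE; have [->//|nij] := eqVneq i j.
  by rewrite !dL // (inj_eq val_inj) // eq_sym.
have := psdB (col_mx dwp dw).
rewrite -/(e _) quad_expand // => hq.
move: key; rewrite -/(e _) mulmxBr eN => hk.
rewrite -/(e _) !eD eZ.
nra.
Qed.
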